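(* Let $m,k$ be natural numbers. If the leading term in the hereditary representation in base $k+1$ of the $k$-th term $G(k,m)$ of the Goodstein sequence $G(m)$ is of the form $a_l\cdot(k+1)^{l}$ with $1<a_l<k+1$, then $G(k+1,m)>G(k,m)$ if $l\ge 1$, and $G(k+1,m)<G(k,m)$ if $l=0$.
   Context: For a natural number base $b>1$, the hereditary representation $m\langle b\rangle$ of $m$ is $\sum_{i=0}^{l} a_i b^{i}$ with $0\le a_i<b$, $a_l\ne0$, each exponent itself written in hereditary representation in base $b$, recursively; its leading term is $a_l b^{l}$. $m\langle b\rangle''$ is obtained by syntactically replacing every $b$ by $b+1$ in $m\langle b\rangle$. The Goodstein sequence $G(m)=\{m, m''-1, (m''-1)''-1,\dots\}$ starts from $m$ in base $2$; its $n$-th term is $G(n,m)$, with $G(1,m)=m$ in base $2$, $G(k,m)$ written in base $k+1$, and $G(k+1,m)=G(k,m)\langle k+1\rangle''-1$. *)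

(* Defs.v *)
From mathcomp Require Import all_boot.
Set Implicit Arguments. Unset Strict Implicit. Unset Printing Implicit Defensive.

Definition digit (b n i : nat) : nat := (n %/ b ^ i) %% b.

(* Hereditary base change m<b>'' : write n in hereditary base b and replace
   every b by b+1.  n = \sum_i digit b n i * b^i, and each exponent i is itself
   rewritten hereditarily.  Digits with index i >= n vanish (b >= 2), so summing
   over i < n is the full expansion.  [fuel] only ensures structural recursion;
   fuel n.+1 is always sufficient. *)
Fixpoint bump_aux (fuel b n : nat) : nat :=
  match fuel with
  | 0 => 0
  | f.+1 => \sum_(0 <= i < n) digit b n i * b.+1 ^ (bump_aux f b i)
  end.

Definition bump (b n : nat) : nat := bump_aux n.+1 b n.

(* gs m j = G(j+1, m) *)
Fixpoint gs (m j : nat) : nat :=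
  match j with
  | 0 => m
  | j'.+1 => bump j'.+2 (gs m j') - 1
  end.

(* Goodstein sequence term G(k, m), for k >= 1: G(1,m) = m and
   G(k+1,m) = G(k,m)<k+1>'' - 1 (the value at k = 0 is junk). *)
Definition G (k m : nat) : nat := gs m k.-1.

Definition lead_exp (b n : nat) : nat := trunc_log b n.
Definition lead_digit (b n : nat) : nat := n %/ b ^ lead_exp b n.

(* Main.v *)
Require Import Defs.
From mathcomp Require Import all_boot.

Lemma expand b N n : 1 < b -> n < b ^ N ->
  n = \sum_(0 <= i < N) digit b n i * b ^ i.
Proof.
move=> b1; elim: N n => [|N IH] n ltn.
  by rewrite big_nil; move: ltn; rewrite expn0 ltnS leqn0 => /eqP.
rewrite big_nat_recl // /digit expn0 divn1 muln1.
have -> : \sum_(0 <= i < N) (n %/ b ^ i.+1 %% b * b ^ i.+1)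
        = b * \sum_(0 <= i < N) digit b (n %/ b) i * b ^ i.
  rewrite big_distrr /=; apply: eq_bigr => i _.
  by rewrite /digit expnS divnMA mulnCA.
rewrite -IH; last by rewrite ltn_divLR ?(ltnW b1) // -expnSr.
by rewrite mulnC addnC -divn_eq.
Qed.

Lemma bump_ge f b n : 1 < b -> n < f -> n <= bump_aux f b n.
Proof.
move=> b1; elim: f n => [|f IH] n // nf.
rewrite /=.
rewrite {1}(@expand b n n b1 (ltn_expl n b1)).
rewrite big_seq_cond [X in _ <= X]big_seq_cond; apply: leq_sum => i; rewrite andbT mem_index_iota => /andP [_ lti].
rewrite leq_mul2l; apply/orP; right.
apply: (@leq_trans (b.+1 ^ i)).
  by case: (i) => [|j] //; rewrite leq_exp2r.
apply: leq_pexp2l => //; apply: IH; exact: leq_trans lti nf.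
Qed.

Lemma pt b n i : 1 < b -> i < n -> b ^ i <= b.+1 ^ (bump_aux n b i).
Proof.
move=> b1 lti; apply: (@leq_trans (b.+1 ^ i)).
  by case: (i) => [|j] //; rewrite leq_exp2r.
by apply: leq_pexp2l => //; apply: bump_ge.
Qed.

Lemma part1 b n : 1 < b -> 0 < n -> 1 <= trunc_log b n ->
  1 < n %/ b ^ trunc_log b n < b -> n.+2 <= Defs.bump b n.
Proof.
move=> b1 n0 l1 /andP [a1 ab].
set l := trunc_log b n.
have bln : b ^ l <= n by apply: trunc_logP.
have ln : l < n by apply: leq_trans (ltn_expl _ b1) bln.
have dl : digit b n l = n %/ b ^ l by rewrite /digit modn_small.
have -> : Defs.bump b n = \sum_(0 <= i < n) digit b n i * b.+1 ^ bump_aux n b i by [].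
have e := @expand b n n b1 (ltn_expl n b1); rewrite {1}e.
have lin : l \in index_iota 0 n by rewrite mem_index_iota.
have uq : uniq (index_iota 0 n) by apply: iota_uniq.
rewrite (bigD1_seq l lin uq) (bigD1_seq l lin uq) /=.
rewrite -addn2 addnAC leq_add //.
  rewrite dl; set a := n %/ b ^ l.
  apply: (@leq_trans (a * b.+1 ^ l)); last first.
    by rewrite leq_mul2l; apply/orP; right; apply: leq_pexp2l => //; apply: bump_ge.
  have : b ^ l < b.+1 ^ l by rewrite ltn_exp2r.
  move=> h; apply: (@leq_trans (a * (b ^ l).+1)); last by rewrite leq_mul2l h orbT.
  by rewrite mulnS addnC leq_add2r.
rewrite big_seq_cond [X in _ <= X]big_seq_cond; apply: leq_sum => i.
rewrite mem_index_iota => /andP [/andP [_ lti] _].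
by rewrite leq_mul2l pt ?orbT.
Qed.

Lemma part2 b n : 1 < b -> 0 < n -> trunc_log b n = 0 -> Defs.bump b n <= n.
Proof.
move=> b1 n0 l0.
have nb : n < b by have := trunc_log_ltn n b1; rewrite l0 expn1.
case: n n0 nb l0 => [|n'] // _ nb _.
have -> : Defs.bump b n'.+1 = \sum_(0 <= i < n'.+1) digit b n'.+1 i * b.+1 ^ bump_aux n'.+1 b i by [].
rewrite big_nat_recl // [X in _ + X]big1 ?addn0.
  have -> : bump_aux n'.+1 b 0 = \sum_(0 <= i < 0) digit b 0 i * b.+1 ^ bump_aux n' b i by [].
  rewrite big_geq //.
  by rewrite muln1 /digit expn0 divn1 modn_small.
move=> i _; rewrite /digit divn_small ?mod0n //.
apply: leq_trans nb _; rewrite -{1}(expn1 b) leq_exp2l //.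
Qed.

Theorem lemma3 (m k : nat) : 1 <= k ->
  forall l a : nat,
    0 < G k m ->
    l = lead_exp k.+1 (G k m) ->
    a = lead_digit k.+1 (G k m) ->
    1 < a < k.+1 ->
    (1 <= l -> G k.+1 m > G k m) /\ (l = 0 -> G k.+1 m < G k m).
Proof.
case: k => [|k] // _ l a n0 -> -> ha.
rewrite /G /lead_digit /lead_exp /= in n0 ha *.
have b1 : 1 < k.+2 by [].
split=> hl.
  have := @part1 _ _ b1 n0 hl ha.
  case: (Defs.bump _ _) => [|x] //= h; rewrite subn1 /=; exact: h.
have := @part2 _ _ b1 n0 hl.
case: (Defs.bump _ _) => [|x] //= h; last by rewrite subn1 /=.
Qed.
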